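(* Every partial Steiner quadruple system of order $n$ has a cyclically $\ell$-good sequencing for each positive integer $\ell \leq 0.164\, n^{1/3}$.
   Context: A partial Steiner quadruple system of order $n$ is a pair $(X,\mathcal{B})$ where $X$ is an $n$-set of vertices ($n\ge 4$) and $\mathcal{B}$ is a collection of $4$-subsets of $X$ (blocks) such that each $3$-subset of $X$ is contained in at most one block. An independent set is a subset $Y\subseteq X$ containing no block. Let $\mathbb{Z}_n=\{0,\ldots,n-1\}$ be the cyclic group of order $n$. A sequencing is a bijection $\varphi:\mathbb{Z}_n\to X$. A set $S\subseteq X$ is cyclically consecutive if $S=\{\varphi(i),\varphi(i+1),\ldots,\varphi(i+|S|-1)\}$ for some $i\in\mathbb{Z}_n$ (addition in $\mathbb{Z}_n$). For a positive integer $\ell$, a sequencing is cyclically $\ell$-good if every set of $\ell$ cyclically consecutive vertices is an independent set. *)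

(* Defs.v *)
From mathcomp Require Import all_boot.
Set Implicit Arguments. Unset Strict Implicit. Unset Printing Implicit Defensive.

Definition partial_SQS (X : finType) (B : {set {set X}}) : Prop :=
  (forall b, b \in B -> #|b| = 4) /\
  (forall t : {set X}, #|t| = 3 ->
     forall b1 b2, b1 \in B -> b2 \in B -> t \subset b1 -> t \subset b2 -> b1 = b2).

Definition independent (X : finType) (B : {set {set X}}) (Y : {set X}) : Prop :=
  forall b, b \in B -> ~ (b \subset Y).

Definition cyc_window (X : finType) (n : nat) (phi : 'I_n -> X) (i : 'I_n) (l : nat)
  : {set X} :=
  [set x | [exists j : 'I_l, exists k : 'I_n,
             (val k == (val i + val j) %% n) && (phi k == x)]].

Definition cyclically_good (X : finType) (B : {set {set X}}) (n : nat)
  (phi : 'I_n -> X) (l : nat) : Prop :=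
  forall i : 'I_n, independent B (cyc_window phi i l).

(* Main.v *)
Require Import Defs.
From mathcomp Require Import all_boot fingroup perm zify.
Set Implicit Arguments. Unset Strict Implicit. Unset Printing Implicit Defensive.

Notation evT n X := ({set 'I_n} * {set X})%type.

Definition injs n (X : finType) : {set {ffun 'I_n -> X}} := [set f : {ffun 'I_n -> X} | injectiveb f].
Definition hit n (X : finType) (f : {ffun 'I_n -> X}) (e : evT n X) : bool :=
  [set f k | k in e.1] == e.2.
Definition Good n (X : finType) (J : {set evT n X}) : {set {ffun 'I_n -> X}} :=
  [set f in injs n X | [forall e in J, ~~ hit f e]].
Definition Bad n (X : finType) (e : evT n X) (J : {set evT n X}) :=
  [set f in Good J | hit f e].
Definition nbr n (X : finType) (e e' : evT n X) : bool :=
  ~~ [disjoint e.1 & e'.1] || ~~ [disjoint e.2 & e'.2].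

Lemma card_bigcup_leq (I T : finType) (P : pred I) (F : I -> {set T}) :
  #|\bigcup_(i | P i) F i| <= \sum_(i | P i) #|F i|.
Proof.
elim/big_rec2: _ => [|i m U _ IH]; first by rewrite cards0.
by rewrite (leq_trans (leq_card_setU _ _).1) // leq_add2l.
Qed.

Lemma Good_sub n (X : finType) (M J : {set evT n X}) : M \subset J -> Good J \subset Good M.
Proof.
move=> sMJ; apply/subsetP=> f; rewrite !inE => /andP[-> /forall_inP H].
by apply/forall_inP=> e eM; apply: H; apply: (subsetP sMJ).
Qed.

Lemma lll n (X : finType) (EV : {set evT n X}) (C : nat) :
  (forall e (M : {set evT n X}), e \in EV -> M \subset EV -> (forall e', e' \in M -> ~~ nbr e e') ->
     C * #|Bad e M| <= #|Good M|) ->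
  (forall e, e \in EV -> 4 * #|[set e' in EV | nbr e e']| <= C) ->
  forall (J : {set evT n X}) e, J \subset EV -> e \in EV -> e \notin J -> C * #|Bad e J| <= 2 * #|Good J|.
Proof.
move=> ND DG J; move: {2}#|J| (leqnn #|J|) => k; elim: k J => [|k IH] J hJ e sJ eE eJ.
  have J0 : J = set0 by apply/eqP; rewrite -cards_eq0 -leqn0.
  have := ND e J eE sJ; rewrite J0 => H.
  by apply: (leq_trans (H _)) => //; [move=> e'; rewrite inE | rewrite leq_pmull].
set Nb := [set e' | nbr e e'].
set N := J :&: Nb; set M := J :\: Nb.
have sMJ : M \subset J by apply: subsetDl.
have sME : M \subset EV by apply: subset_trans sJ.
have nbM : forall e', e' \in M -> ~~ nbr e e' by move=> e'; rewrite !inE => /andP[].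
have hBad : #|Bad e J| <= #|Bad e M|.
  apply: subset_leq_card; apply/subsetP=> f; rewrite !inE => /andP[fG ->].
  by rewrite andbT; have := subsetP (Good_sub sMJ) f; rewrite !inE; apply.
have hND := ND e M eE sME nbM.
case: (boolP (N == set0)) => [/eqP N0 | Nn0].
  have MJ : M = J.
    apply/setP=> x; rewrite !inE; apply/andb_idl => xJ; apply/negP => nx.
    have : x \in N by rewrite !inE xJ nx.
    by rewrite N0 inE.
  by rewrite -MJ (leq_trans hND) // leq_pmull.
have ltMJ : #|M| < #|J|.
  apply: proper_card; rewrite properEneq sMJ andbT; apply/eqP=> MJ.
  case/set0Pn: Nn0 => x; rewrite !inE => /andP[xJ xN].
  by move: xJ; rewrite -MJ !inE xN.
have IHM : forall k', k' \in N -> C * #|Bad k' M| <= 2 * #|Good M|.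
  move=> k'; rewrite !inE => /andP[k'J k'N].
  apply: IH => //; first by rewrite -ltnS (leq_trans ltMJ).
    by apply: (subsetP sJ).
  by rewrite !inE k'N.
have cover : #|Good M| <= #|Good J| + \sum_(k' in N) #|Bad k' M|.
  apply: leq_trans (leq_add (leqnn _) (card_bigcup_leq _ _)).
  apply: leq_trans (leq_card_setU _ _).1.
  apply: subset_leq_card; apply/subsetP=> f fGM.
  case fGJ: (f \in Good J); first by rewrite inE fGJ.
  move: fGJ; rewrite inE; move: (fGM); rewrite !inE => /andP[-> /forall_inP HM] /=.
  move/negbT/forall_inPn=> [e' e'J]; rewrite negbK => he'.
  apply/orP; right; apply/bigcupP; exists e'.
    rewrite !inE e'J /=; apply/negPn/negP=> ne'.
    have e'M : e' \in M by rewrite !inE e'J ne'.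
    by move: (HM e' e'M); rewrite he'.
  by rewrite /Bad inE fGM he'.
have hN : 4 * #|N| <= C.
  apply: leq_trans (DG e eE); rewrite leq_mul2l /=; apply: subset_leq_card.
  apply/subsetP=> x; rewrite !inE => /andP[xJ ->]; by rewrite (subsetP sJ).
have hsum : C * \sum_(k' in N) #|Bad k' M| <= #|N| * (2 * #|Good M|).
  rewrite big_distrr /= -sum_nat_const; apply: leq_sum => k' /IHM //.
set GM := #|Good M| in cover hsum hND IHM *; set GJ := #|Good J| in cover *.
set S := \sum_(k' in N) _ in cover hsum.
set bJ := #|Bad e J| in hBad *; set bM := #|Bad e M| in hBad hND.
set nN := #|N| in hN hsum.
have h1 : C * GM <= C * GJ + nN * (2 * GM).
  apply: leq_trans (leq_add (leqnn _) hsum); rewrite -mulnDr leq_mul2l cover orbT //.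
case: (posnP C) => [-> //|Cpos].
have h2 : GM <= 2 * GJ by nia.
nia.
Qed.

Lemma Good0 n (X : finType) : Good (set0 : {set evT n X}) = injs n X.
Proof.
apply/setP=> f; rewrite !inE; case: (injectiveb f) => //=.
by apply/forall_inP=> e; rewrite inE.
Qed.

Lemma Good_split n (X : finType) (J : {set evT n X}) e : e \in J ->
  #|Good (J :\ e)| = #|Bad e (J :\ e)| + #|Good J|.
Proof.
move=> eJ; rewrite -(cardsID (Bad e (J :\ e)) (Good (J :\ e))).
congr (_ + _).
  rewrite (setIidPr _) //; apply/subsetP=> f; rewrite inE => /andP[] //.
apply: eq_card => f; rewrite /Bad /Good !inE.
case: (injectiveb f); rewrite /= ?andbF //.
apply/idP/idP.
  case/andP=> nh /forall_inP H; apply/forall_inP=> e' e'J.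
  case: (eqVneq e' e) => [->|ne]; last by apply: H; rewrite !inE ne.
  by apply: contra nh => he; rewrite he andbT; apply/forall_inP.
move/forall_inP=> H.
have F' : [forall e0 in J :\ e, ~~ hit f e0].
  by apply/forall_inP=> e' /setD1P[_ e'J]; exact: H.
by rewrite F' /= H.
Qed.

Lemma good_pos n (X : finType) (EV : {set evT n X}) (C : nat) :
  (forall e (M : {set evT n X}), e \in EV -> M \subset EV -> (forall e', e' \in M -> ~~ nbr e e') ->
     C * #|Bad e M| <= #|Good M|) ->
  (forall e, e \in EV -> 4 * #|[set e' in EV | nbr e e']| <= C) ->
  3 <= C -> 0 < #|injs n X| ->
  forall J : {set evT n X}, J \subset EV -> 0 < #|Good J|.
Proof.
move=> ND DG C3 i0 J; move: {2}#|J| (leqnn #|J|) => k; elim: k J => [|k IH] J hJ sJ.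
  have J0 : J = set0 by apply/eqP; rewrite -cards_eq0 -leqn0.
  by rewrite J0 Good0.
case: (set_0Vmem J) => [->|[e eJ]]; first by rewrite Good0.
have sJ' : J :\ e \subset EV by apply: subset_trans sJ; apply: subD1set.
have hJ' : #|J :\ e| <= k by move: hJ; rewrite (cardsD1 e J) eJ.
have pos := IH _ hJ' sJ'.
have eE : e \in EV by apply: (subsetP sJ).
have L := lll ND DG sJ' eE (negbT (setD11 e J)).
have := Good_split eJ; nia.
Qed.
Lemma perm_exists (X : finType) (A C : {set X}) : #|A| = #|C| ->
  exists rho : X -> X, [/\ injective rho, rho @: A = C &
     forall x, x \notin A -> x \notin C -> rho x = x].
Proof.
move: {2}#|A :\: C| (erefl #|A :\: C|) => k; elim: k A => [|k IH] A hk hAC.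
  exists id; split => //; rewrite imset_id.
  have sAC : A \subset C by rewrite -setD_eq0 -cards_eq0 hk.
  by apply/setP; apply/subset_cardP.
have : 0 < #|A :\: C| by rewrite hk.
case/card_gt0P=> a; rewrite inE => /andP[aC aA].
have hCA : #|C :\: A| = #|A :\: C|.
  have h1 := cardsID C A; have h2 := cardsID A C.
  by rewrite setIC in h2; lia.
have : 0 < #|C :\: A| by rewrite hCA hk.
case/card_gt0P=> c; rewrite inE => /andP[cA cC].
have ac : a != c by apply: contraNneq cA => <-.
set A' := c |: (A :\ a).
have hA' : #|A'| = #|C|.
  rewrite cardsU1 inE negb_and cA orbT /= -hAC (cardsD1 a A) aA; lia.
have hk' : #|A' :\: C| = k.
  have -> : A' :\: C = (A :\: C) :\ a.
    apply/setP=> x; rewrite !inE.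
    case: (eqVneq x c) => [->|xc]; first by rewrite cC /= andbF.
    by rewrite /=; case: (x \in C); rewrite ?andbF.
  by move: hk; rewrite (cardsD1 a (A :\: C)) inE aA aC /=; case.
case: (IH A' hk' hA') => rho' [irho' imrho' fixrho'].
have imt : [set tperm a c x | x in A] = A'.
  rewrite (can2_imset_pre _ (tpermK a c) (tpermK a c)).
  apply/setP=> y; rewrite !inE.
  case: (eqVneq y a) => [->|ya].
    by rewrite tpermL (negPf cA) (negPf ac).

  case: (eqVneq y c) => [->|yc]; first by rewrite tpermR aA.
  by rewrite tpermD 1?eq_sym.
exists (rho' \o tperm a c); split.
- by apply: inj_comp => //; apply: perm_inj.
- by rewrite imset_comp imt.
move=> x xA xC /=.
have xa : a != x by apply: contraNneq xA => <-.
have xc : c != x by apply: contraNneq xC => <-.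
rewrite tpermD //; apply: fixrho' => //.
by rewrite !inE negb_or eq_sym xc /= negb_and xA orbT.
Qed.

Lemma rho_out (X : finType) (rho : X -> X) (b T : {set X}) :
  injective rho -> rho @: b = T -> (forall x, x \notin b -> x \notin T -> rho x = x) ->
  forall y, y \in T -> y \notin b -> rho y \in b.
Proof.
move=> irho imb fx y yT yb; apply/negPn/negP=> ryb.
case ryT: (rho y \in T).
  move: ryT; rewrite -imb => /imsetP[z zb /irho yz].
  by move: yb; rewrite yz zb.
have := fx _ ryb (negbT ryT); move/irho=> ryy.
by move: ryT; rewrite ryy yT.
Qed.

Lemma neg_dep n (X : finType) (e : evT n X) (M : {set evT n X}) :
  #|e.1| = 4 -> #|e.2| = 4 ->
  (forall e', e' \in M -> ~~ nbr e e') ->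
  'C(#|X|, 4) * #|Bad e M| <= #|Good M|.
Proof.
case: e => S b /= cS cb nM.
set T4 := [set T : {set X} | #|T| == 4].
have cT4 : #|T4| = 'C(#|X|, 4) by rewrite card_draws.
have part : #|Good M| = \sum_(T in T4) #|[set f in Good M | hit f (S, T)]|.
  rewrite -sum1_card (partition_big (fun f : {ffun 'I_n -> X} => [set f k | k in S]) (mem T4)).
    apply: eq_bigr => T _; rewrite -sum1_card; apply: eq_bigl => f.
    by rewrite !inE /hit /=.
  move=> f; rewrite /Good !inE => /andP[fi _].
  by rewrite card_imset ?cS //; apply/injectiveP.
have step : forall T, T \in T4 -> #|Bad (S, b) M| <= #|[set f in Good M | hit f (S, T)]|.
  move=> T; rewrite inE => /eqP cT.
  have [rho [irho imb fixr]] := perm_exists (etrans cb (esym cT)).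
  set g := fun f : {ffun 'I_n -> X} => [ffun k => rho (f k)].
  have ig : injective g.
    move=> f1 f2 /ffunP H; apply/ffunP=> k; apply: irho; have := H k; by rewrite !ffunE.
  rewrite -(card_imset _ ig); apply: subset_leq_card; apply/subsetP=> f'.
  case/imsetP=> f; rewrite /Bad /Good !inE => /andP[/andP[fi /forall_inP fM] hf] ->.
  move/injectiveP: fi => fi.
  have hfb : [set f k | k in S] = b by apply/eqP.
  have himg : [set g f k | k in S] = T.
    rewrite -imb -hfb -imset_comp.
    by apply: eq_imset => k; rewrite /g ffunE.
  rewrite /hit /= himg eqxx andbT; apply/andP; split.
    by apply/injectiveP=> k1 k2; rewrite /g !ffunE => /irho /fi.
  apply/forall_inP=> [[S' b']] e'M; have := nM _ e'M; rewrite /nbr /= negb_or !negbK.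
  case/andP=> dS db; apply/negP=> /eqP himg'.
  have fix' : {in S', forall k, g f k = f k}.
    move=> k kS'; rewrite /g ffunE.
    have fkb : f k \notin b.
      apply/negP; rewrite -hfb => /imsetP[k0 k0S /fi kk0].
      by move: dS; rewrite disjoint_sym => /disjointFr/(_ kS'); rewrite kk0 k0S.
    apply: (fixr) => //; apply/negP=> fkT.
    have rb := rho_out irho imb fixr fkT fkb.
    have rb' : rho (f k) \in b'.
      by rewrite -himg'; apply/imsetP; exists k => //; rewrite /g ffunE.
    by move: db => /disjointFr/(_ rb); rewrite rb'.
  have := fM _ e'M; rewrite /hit /= -himg'.
  by rewrite (eq_in_imset fix') eqxx.
rewrite part -cT4 -sum_nat_const; exact: leq_sum.
Qed.

Definition win n l (i : 'I_n) : {set 'I_n} :=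
  [set k : 'I_n | [exists j : 'I_l, (k : nat) == (i + j) %% n]].
Definition short n l (S : {set 'I_n}) : bool :=
  (#|S| == 4) && [exists i, S \subset win l i].
Definition EVs n (X : finType) l (B : {set {set X}}) : {set evT n X} :=
  [set e | short l e.1 && (e.2 \in B)].
Definition Dn n l (d p : 'I_n) : {set 'I_n} :=
  [set insubd d ((p + (n - l.-1) + t) %% n) | t : 'I_(l.*2.-1)].

Lemma card_Dn n l (d p : 'I_n) : #|Dn l d p| <= l.*2.-1.
Proof. by rewrite (leq_trans (leq_imset_card _ _)) // card_ord. Qed.

Lemma win_Dn n l (d p q : 'I_n) i : l <= n ->
  p \in win l i -> q \in win l i -> q \in Dn l d p.
Proof.
move=> ln; rewrite !inE => /existsP[j /eqP hp] /existsP[j' /eqP hq].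
have jl := ltn_ord j; have j'l := ltn_ord j'.
have n0 : 0 < n by apply: leq_ltn_trans (ltn_ord p).
have tl : j' + (l.-1 - j) < l.*2.-1 by lia.
apply/imsetP; exists (Ordinal tl) => //=.
apply: val_inj; rewrite val_insubd ltn_mod n0 /= hq hp -addnA modnDml.
have -> : i + j + (n - l.-1 + (j' + (l.-1 - j))) = (i + j') + n by lia.
by rewrite modnDr.
Qed.

Lemma card_short_p n l (d p : 'I_n) : l <= n ->
  #|[set S : {set 'I_n} | short l S & p \in S]| <= 'C(l.*2.-1, 3).
Proof.
move=> ln.
set A := [set S | _ & _].
have inj : {in A &, injective (fun S => S :\ p)}.
  move=> S1 S2; rewrite !inE => /andP[_ p1] /andP[_ p2] /= E.
  by rewrite -(setD1K p1) -(setD1K p2) E.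
rewrite -(card_in_imset inj).
apply: leq_trans (leq_bin2l 3 (card_Dn l d p)).
rewrite -cards_draws; apply: subset_leq_card; apply/subsetP=> U /imsetP[S].
rewrite inE => /andP[/andP[/eqP cS /existsP[i sSw]] pS] ->.
rewrite inE; apply/andP; split.
  apply/subsetP=> q; rewrite inE => /andP[_ qS].
  exact: (win_Dn d ln (subsetP sSw _ pS) (subsetP sSw _ qS)).
by move: cS; rewrite (cardsD1 p S) pS /= => h; rewrite -(eqn_add2l 1) h.
Qed.

Lemma card_short n l (d : 'I_n) : l <= n ->
  #|[set S : {set 'I_n} | short l S]| <= n * 'C(l.*2.-1, 3).
Proof.
move=> ln.
have H : #|[set S : {set 'I_n} | short l S]| <=
    \sum_(p : 'I_n) #|[set S : {set 'I_n} | short l S & p \in S]|.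
  apply: leq_trans (card_bigcup_leq _ _); apply: subset_leq_card; apply/subsetP=> S.
  rewrite inE => sh; move: (sh) => /andP[/eqP cS _].
  have : 0 < #|S| by rewrite cS.
  case/card_gt0P=> p pS.
  by apply/bigcupP; exists p => //; rewrite inE sh pS.
apply: leq_trans H _.
have : \sum_(p : 'I_n) #|[set S : {set 'I_n} | short l S & p \in S]| <=
    \sum_(p : 'I_n) 'C(l.*2.-1, 3) by apply: leq_sum => p _; exact: card_short_p.
by rewrite sum_nat_const card_ord.
Qed.

Lemma fam_count (X : finType) (F : {set {set X}}) (U : {set X}) (m k : nat) :
  (forall s, s \in F -> #|s| = m /\ s \subset U) ->
  (forall t s1 s2 : {set X}, #|t| = k -> s1 \in F -> s2 \in F -> t \subset s1 -> t \subset s2 -> s1 = s2) ->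
  'C(m, k) * #|F| <= 'C(#|U|, k).
Proof.
move=> hF huniq.
set P := [set ts : {set X} * {set X} | [&& ts.2 \in F, ts.1 \subset ts.2 & #|ts.1| == k]].
have cP : #|P| = 'C(m, k) * #|F|.
  rewrite -sum1_card (partition_big (fun ts : {set X} * {set X} => ts.2) (mem F)); last first.
    by move=> ts; rewrite inE => /and3P[].
  rewrite mulnC -sum_nat_const; apply: eq_bigr => s sF0.
  have sF : s \in F by [].
  have [cs sU] := hF s sF.
  set G := [set t : {set X} | t \subset s & #|t| == k].
  have inj : injective (fun t : {set X} => (t, s)) by move=> t1 t2 [].
  rewrite -cs -cards_draws -/G -(card_imset _ inj) sum1_card.
  apply: eq_card => [[t s']]; rewrite unfold_in /= !inE /=.
  apply/idP/idP.
    case/andP=> /and3P[s'F ts' ct] /eqP es; subst s'.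
    by apply/imsetP; exists t => //; rewrite inE ts' ct.
  case/imsetP=> t0; rewrite inE => /andP[t0s ct0] [-> ->].
  by rewrite sF t0s ct0 eqxx.
have injP : {in P &, injective (fun ts : {set X} * {set X} => ts.1)}.
  move=> [t1 s1] [t2 s2]; rewrite !inE /= => /and3P[s1F t1s1 /eqP ct1] /and3P[s2F t2s2 _] E.
  subst t2; by rewrite (huniq t1 s1 s2).
rewrite -cP -(card_in_imset injP) -cards_draws; apply: subset_leq_card.
apply/subsetP=> t /imsetP[[t' s] + ->]; rewrite !inE /= => /and3P[sF ts ct].
rewrite ct andbT; exact: subset_trans ts (proj2 (hF s sF)).
Qed.

Lemma blocks_total (X : finType) (B : {set {set X}}) :
  partial_SQS B -> 4 * #|B| <= 'C(#|X|, 3).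
Proof.
case=> hsz htr.
have := @fam_count X B [set: X] 4 3.
rewrite cardsT; apply.
  by move=> s sB; split; [exact: hsz | exact: subsetT].
by move=> t s1 s2 ct s1B s2B ts1 ts2; exact: (htr t ct s1 s2 s1B s2B ts1 ts2).
Qed.

Lemma blocks_deg (X : finType) (B : {set {set X}}) (x : X) :
  partial_SQS B -> 3 * #|[set b in B | x \in b]| <= 'C(#|X|.-1, 2).
Proof.
case=> hsz htr.
set Bx := [set b in B | x \in b].
have inj : {in Bx &, injective (fun b : {set X} => b :\ x)}.
  move=> b1 b2; rewrite !inE => /andP[_ x1] /andP[_ x2] /= E.
  by rewrite -(setD1K x1) -(setD1K x2) E.
rewrite -(card_in_imset inj) -(cardsC1 x).
rewrite (_ : 3 = 'C(3, 2)) //; apply: fam_count.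
  move=> s /imsetP[b]; rewrite inE => /andP[bB xb] ->; split.
    by move: (hsz b bB); rewrite (cardsD1 x b) xb /= => h; apply/eqP; rewrite -(eqn_add2l 1) h.
  by apply/subsetP=> y; rewrite !inE => /andP[].
move=> t s1 s2 ct /imsetP[b1]; rewrite inE => /andP[b1B xb1] -> /imsetP[b2].
rewrite inE => /andP[b2B xb2] -> t1 t2.
have xt : x \notin t by apply/negP=> /(subsetP t1); rewrite !inE eqxx.
have c3 : #|x |: t| = 3 by rewrite cardsU1 xt ct.
have u1 : x |: t \subset b1.
  by rewrite subUset sub1set xb1 /=; apply: subset_trans t1 _; apply: subD1set.
have u2 : x |: t \subset b2.
  by rewrite subUset sub1set xb2 /=; apply: subset_trans t2 _; apply: subD1set.
by rewrite (htr _ c3 b1 b2 b1B b2B u1 u2).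
Qed.

Lemma nbr_count n (X : finType) l (B : {set {set X}}) (e : evT n X) :
  #|[set e' in @EVs n X l B | nbr e e']| <=
   \sum_(p in e.1) (#|[set S : {set 'I_n} | short l S & p \in S]| * #|B|) +
   \sum_(x in e.2) (#|[set S : {set 'I_n} | short l S]| * #|[set b in B | x \in b]|).
Proof.
set EV := @EVs n X l B.
have h1 : forall p, #|[set e' in EV | p \in e'.1]| =
    #|[set S : {set 'I_n} | short l S & p \in S]| * #|B|.
  move=> p; rewrite -cardsX; apply: eq_card => [[S b]]; rewrite !inE /=.
  by case: (short l S); case: (b \in B); case: (p \in S).
have h2 : forall x, #|[set e' in EV | x \in e'.2]| =
    #|[set S : {set 'I_n} | short l S]| * #|[set b in B | x \in b]|.
  move=> x; rewrite -cardsX; apply: eq_card => [[S b]]; rewrite !inE /=.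
  by case: (short l S); case: (b \in B); case: (x \in b).
have H : [set e' in EV | nbr e e'] \subset
    (\bigcup_(p in e.1) [set e' in EV | p \in e'.1]) :|:
    (\bigcup_(x in e.2) [set e' in EV | x \in e'.2]).
  apply/subsetP=> e'; rewrite inE => /andP[e'E]; rewrite /nbr.
  case/orP; rewrite -setI_eq0 => /set0Pn[y]; rewrite inE => /andP[y1 y2];
    rewrite inE; apply/orP; [left | right]; apply/bigcupP; exists y => //;
    by rewrite inE e'E.
apply: leq_trans (subset_leq_card H) _.
apply: leq_trans (leq_card_setU _ _).1 _.
apply: leq_add; apply: leq_trans (card_bigcup_leq _ _) _; apply: eq_leq; apply: eq_bigr => *.
  exact: h1.
exact: h2.
Qed.

Lemma arith_DG (n A Bs nB nS C3 Cn12 Cn3 Cn4 : nat) :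
  A <= 4 * C3 * nB -> 3 * Bs <= 4 * nS * Cn12 -> nS <= n * C3 -> 4 * nB <= Cn3 ->
  n * Cn12 = 3 * Cn3 -> 4 * Cn4 = (n - 3) * Cn3 -> 80 * C3 + 3 <= n ->
  4 * (A + Bs) <= Cn4.
Proof.
move=> hA hB hS hnB e1 e2 hn.
have h1 := leq_mul (leqnn (12 * C3)) hnB.
have s1 : 12 * A <= 12 * C3 * Cn3 by nia.
have h2 := leq_mul (leqnn (16 * Cn12)) hS.
have s2 : 12 * Bs <= 48 * C3 * Cn3 by nia.
have h3 : 80 * C3 <= n - 3 by lia.
have h4 := leq_mul h3 (leqnn Cn3).
have s3 : 240 * C3 * Cn3 <= 12 * Cn4 by nia.
nia.
Qed.

Lemma DG_bound n (X : finType) l (B : {set {set X}}) (d : 'I_n) (e : evT n X) :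
  #|X| = n -> partial_SQS B -> l <= n -> 80 * 'C(l.*2.-1, 3) + 3 <= n ->
  e \in @EVs n X l B -> 4 * #|[set e' in @EVs n X l B | nbr e e']| <= 'C(#|X|, 4).
Proof.
move=> cX hB ln hn; case: e => S b; rewrite inE /= => /andP[/andP[/eqP cS _] bB].
have [hsz _] := hB; have cb := hsz b bB.
apply: leq_trans (leq_mul (leqnn 4) (nbr_count l B (S, b))) _.
rewrite /= cX.
apply: (@arith_DG n _ _ #|B| #|[set S0 : {set 'I_n} | short l S0]| 'C(l.*2.-1, 3)
          'C(n.-1, 2) 'C(n, 3)).
- apply: leq_trans (_ : \sum_(p in S) ('C(l.*2.-1, 3) * #|B|) <= _).
    by apply: leq_sum => p _; rewrite leq_mul2r card_short_p ?orbT.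
  by rewrite sum_nat_const cS mulnA.
- rewrite big_distrr /=.
  apply: leq_trans (_ : \sum_(x in b) (#|[set S0 : {set 'I_n} | short l S0]| * 'C(n.-1, 2)) <= _).
    apply: leq_sum => x _; rewrite mulnCA leq_mul2l -cX blocks_deg ?orbT //.
  by rewrite sum_nat_const cb mulnA.
- exact: card_short d ln.
- by rewrite -cX; apply: blocks_total.
- by rewrite mul_bin_diag.
- by rewrite mul_bin_left.
- exact: hn.
Qed.

Lemma arith_main (l n : nat) : 0 < l -> 10 ^ 9 * l ^ 3 <= 164 ^ 3 * n ->
  80 * 'C(l.*2.-1, 3) + 3 <= n /\ l <= n /\ 15 <= n.
Proof.
move=> l0 h.
set m := l.*2.-1.
have e : 'C(m, 3) * 6 = m * (m - 1) * (m - 2).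
  by rewrite (bin_ffact m 3) !ffactnSr ffactn0 subn0 mul1n.
have hm : m <= l.*2 by rewrite /m; lia.
have hm3 : m * (m - 1) * (m - 2) <= 8 * l ^ 3.
  have : m * (m - 1) * (m - 2) <= l.*2 * l.*2 * l.*2.
    by apply: leq_mul; [apply: leq_mul|]; lia.
  rewrite -!muln2; nia.
have L1 : 1 <= l ^ 3 by rewrite expn_gt0 l0.
have hl3 : l <= l ^ 3 by rewrite -{1}(expn1 l) leq_pexp2l.
split; lia.
Qed.

Theorem corollary4 (X : finType) (n : nat) (B : {set {set X}}) :
  #|X| = n -> 4 <= n -> partial_SQS B ->
  forall l : nat, 0 < l -> 10 ^ 9 * l ^ 3 <= 164 ^ 3 * n ->
  exists phi : 'I_n -> X, bijective phi /\ cyclically_good B phi l.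
Proof.
move=> cX n4 hB l l0 hl.
have [hC [ln n15]] := arith_main l0 hl.
have n0 : 0 < n by lia.
pose d : 'I_n := Ordinal n0.
set EV := @EVs n X l B.
have ND : forall e (M : {set evT n X}), e \in EV -> M \subset EV ->
    (forall e', e' \in M -> ~~ nbr e e') -> 'C(#|X|, 4) * #|Bad e M| <= #|Good M|.
  move=> [S b] M; rewrite inE /= => /andP[/andP[/eqP cS _] bB] _ nM.
  by apply: neg_dep => //=; exact: (proj1 hB) b bB.
have DG : forall e, e \in EV -> 4 * #|[set e' in EV | nbr e e']| <= 'C(#|X|, 4).
  move=> e eE; exact: (@DG_bound n X l B d e cX hB ln hC eE).
have C3 : 3 <= 'C(#|X|, 4).
  rewrite cX; have := mul_bin_left n 3; have : 0 < 'C(n, 3) by rewrite bin_gt0; lia.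
  move=> h1 h2; nia.
have i0 : 0 < #|injs n X|.
  by rewrite /injs card_inj_ffuns card_ord ffact_gt0 cX.
have := good_pos ND DG C3 i0 (subxx EV).
case/card_gt0P => f fG.
exists (fun k => f k).
move: fG; rewrite /Good /injs !inE => /andP[fi /forall_inP fG].
have fI : injective (fun k => f k) by apply/injectiveP.
split.
  by apply: inj_card_bij fI _; rewrite card_ord cX.
move=> i b bB sw.
pose S := [set k : 'I_n | f k \in b].
have imS : [set f k | k in S] = b.
  apply/setP=> x; apply/imsetP/idP => [[k]|xb]; first by rewrite inE => fk ->.
  have := subsetP sw x xb; rewrite inE => /existsP[j /existsP[k /andP[_ /eqP fkx]]].
  by exists k; rewrite ?inE fkx.
have cS : #|S| = 4.
  by rewrite -(card_imset S fI) imS; exact: (proj1 hB) b bB.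
have sSw : S \subset win l i.
  apply/subsetP=> k; rewrite inE => fkb; have := subsetP sw _ fkb.
  rewrite inE => /existsP[j /existsP[k' /andP[/eqP hk' /eqP fk']]].
  have kk : k' = k by apply: fI.
  rewrite inE; apply/existsP; exists j; by rewrite -kk hk'.
have eE : (S, b) \in EV.
  rewrite inE /= /short cS eqxx bB /= andbT; apply/existsP; exists i; exact: sSw.
by have := fG _ eE; rewrite /hit /= imS eqxx.
Qed.
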